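(* Let $\mathbf{P}_A,\mathbf{P}_B,\mathbf{Q}_A,\mathbf{Q}_B\in\mathbb{R}^{n\times n}$ be symmetric positive definite and, for $\omega\in[0,1]$, $\bar\omega=1-\omega$, let $\mathbf{H}_{\mathrm{SCI}}(\omega)=\omega(\mathbf{P}_A+\omega\mathbf{Q}_A)^{-1}+\bar\omega(\mathbf{P}_B+\bar\omega\mathbf{Q}_B)^{-1}$. Then for all $\omega\in[0,1]$, the second derivative satisfies $\mathbf{H}_{\mathrm{SCI}}''(\omega)\prec0$.
   Context: $\prec 0$ means negative definite; the derivative is taken with respect to $\omega$. *)

(* Defs.v *)
From HB Require Import structures.
From mathcomp Require Import all_boot all_order all_algebra.
From mathcomp Require Import all_classical all_reals all_analysis.
Set Implicit Arguments. Unset Strict Implicit. Unset Printing Implicit Defensive.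
Import Order.TTheory GRing.Theory Num.Theory.
Import numFieldNormedType.Exports.
Local Open Scope ring_scope.

Definition posdef (R : realType) (n : nat) (M : 'M[R]_n) : Prop :=
  M^T = M /\ forall x : 'rV[R]_n, x != 0 -> 0 < (x *m M *m x^T) 0 0.

Definition negdef (R : realType) (n : nat) (M : 'M[R]_n) : Prop :=
  M^T = M /\ forall x : 'rV[R]_n, x != 0 -> (x *m M *m x^T) 0 0 < 0.

Definition H_SCI (R : realType) (n : nat) (PA PB QA QB : 'M[R]_n) (w : R)
  : 'M[R]_n :=
  w *: invmx (PA + w *: QA) + (1 - w) *: invmx (PB + (1 - w) *: QB).

(* Main.v *)
Require Import Defs.
From HB Require Import structures.
From mathcomp Require Import all_boot all_order all_algebra.
From mathcomp Require Import all_classical all_reals all_analysis.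
From mathcomp Require Import ring lra.
Import Order.TTheory GRing.Theory Num.Theory.
Import numFieldNormedType.Exports.
Local Open Scope ring_scope.

Section Aux.
Variable R : realType.

Lemma mulmx_derive m k p (f : R -> 'M[R]_(m,k)) (g : R -> 'M[R]_(k,p)) t :
  derivable f t 1 -> derivable g t 1 ->
  derivable (fun x => f x *m g x) t 1 /\
  'D_1 (fun x => f x *m g x) t = 'D_1 f t *m g t + f t *m 'D_1 g t.
Proof.
move=> df dg.
have dfe i j : derivable (fun x => f x i j) t 1 by apply: (derivable_mxP f t 1).1.
have dge i j : derivable (fun x => g x i j) t 1 by apply: (derivable_mxP g t 1).1.
have E i j : (fun x => (f x *m g x) i j) =
    \sum_(l < k) ((fun x => f x i l) * (fun x => g x l j)).
  by apply/funext => x; rewrite mxE fct_sumE.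
have de i j : derivable (fun x => (f x *m g x) i j) t 1.
  by rewrite E; apply: derivable_sum => l; apply: derivableM.
have D : derivable (fun x => f x *m g x) t 1 by apply/derivable_mxP.
split => //.
rewrite derive_mx //; apply/matrixP => i j; rewrite !mxE E derive_sum; last first.
  by move=> l; apply: derivableM.
rewrite -big_split /=; apply: eq_bigr => l _.
rewrite deriveM // (derive_mx df) (derive_mx dg) !mxE /=.
by rewrite addrC; congr (_ + _) => //; exact: mulrC.
Qed.
Arguments mulmx_derive {m k p f g t}.

Lemma scale_derive m k (a : R -> R) (f : R -> 'M[R]_(m,k)) t :
  derivable a t 1 -> derivable f t 1 ->
  derivable (fun x => a x *: f x) t 1 /\
  'D_1 (fun x => a x *: f x) t = 'D_1 a t *: f t + a t *: 'D_1 f t.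
Proof.
move=> da df.
have dfe i j : derivable (fun x => f x i j) t 1 by apply: (derivable_mxP f t 1).1.
have E i j : (fun x => (a x *: f x) i j) = a * (fun x => f x i j).
  by apply/funext => x; rewrite mxE.
have de i j : derivable (fun x => (a x *: f x) i j) t 1.
  by rewrite E; apply: derivableM.
have D : derivable (fun x => a x *: f x) t 1 by apply/derivable_mxP.
split => //.
rewrite derive_mx //; apply/matrixP => i j; rewrite !mxE E.
rewrite deriveM // (derive_mx df) !mxE /=.
by rewrite addrC; congr (_ + _) => //; exact: mulrC.
Qed.
Arguments scale_derive {m k a f t}.

Lemma inv_derive n (P Q : 'M[R]_n) t : (P + t *: Q) \in unitmx ->
  (\forall y \near t, (P + (y : R) *: Q) \in unitmx) /\
  derivable (fun y : R => invmx (P + y *: Q)) t 1 /\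
  'D_1 (fun y : R => invmx (P + y *: Q)) t =
     - (invmx (P + t *: Q) *m Q *m invmx (P + t *: Q)).
Proof.
move=> Ut.
pose PX : 'M[{poly R}]_n := map_mx polyC P + 'X *: map_mx polyC Q.
have ev y : map_mx (horner_eval y) PX = P + y *: Q.
  by apply/matrixP => i j; rewrite !mxE /= horner_evalE hornerD hornerM hornerX !hornerC.
have detE y : \det (P + y *: Q) = (\det PX).[y].
  by rewrite -ev det_map_mx.
have adjE y i j : \adj (P + y *: Q) i j = (\adj PX i j).[y].
  by rewrite -ev -map_mx_adj mxE.
have dt0 : (\det PX).[t] != 0 by rewrite -detE -unitfE -unitmxE.
have nr : \forall y \near t, (\det PX).[y] != 0.
  exact: (cvgr_neq0 _ (@continuous_horner _ (\det PX) t) dt0).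
have nU : \forall y \near t, (P + y *: Q) \in unitmx.
  by near do rewrite unitmxE unitfE detE.
split => //.
set N := fun y : R => invmx (P + y *: Q).
have dN : derivable N t 1.
  apply/derivable_mxP => i j.
  apply: (@near_eq_derivable _ _ _
    ((fun y => ((\det PX).[y])^-1) * horner (\adj PX i j))).
    near=> y; rewrite /N /invmx.
    have -> : (P + y *: Q) \in unitmx by near: y.
    by rewrite [RHS]mxE detE adjE.
  apply: derivableM; last exact: derivable_horner.
  by apply: derivableV => //; exact: derivable_horner.
split => //.
set M := fun y => P + y *: Q.
have dS := scale_derive (@derivable_id _ _ t 1) (derivable_cst Q t 1).
have dM : derivable M t 1.
  have -> : M = cst P + (fun x => id x *: cst Q x) by [].
  by apply: derivableD; [exact: derivable_cst | exact: dS.1].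
have DM : 'D_1 M t = Q.
  have -> : M = cst P + (fun x => id x *: cst Q x) by [].
  rewrite deriveD; [|exact: derivable_cst|exact: dS.1].
  by rewrite dS.2 !derive_cst derive_id scale1r scaler0 add0r addr0.
have [_ DNM] := mulmx_derive dN dM.
have DNM0 : 'D_1 (fun x => N x *m M x) t = 0.
  rewrite (@near_eq_derive _ _ _ _ (cst 1%:M)) ?derive_cst //.
  near=> y; rewrite /N /M mulVmx //; near: y; exact: nU.
move: DNM; rewrite DNM0 DM => /eqP; rewrite eq_sym addr_eq0 => /eqP E.
by rewrite -[LHS](mulmxK Ut) -/(M t) E mulNmx.
Unshelve. all: by end_near. Qed.


Lemma sandwich n (N : R -> 'M[R]_n) (C : 'M[R]_n) t : derivable N t 1 ->
  derivable (fun y => N y *m C *m N y) t 1 /\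
  'D_1 (fun y => N y *m C *m N y) t = 'D_1 N t *m C *m N t + N t *m C *m 'D_1 N t.
Proof.
move=> dN.
have [d1 D1] := mulmx_derive dN (derivable_cst C t 1).
have [d2 D2] := mulmx_derive d1 dN.
split; first exact: d2.
rewrite D2 D1 derive_cst mulmx0 addr0 //.
Qed.
End Aux.
Arguments mulmx_derive {R m k p f g t}.
Arguments scale_derive {R m k a f t}.
Arguments inv_derive {R n P Q t}.
Arguments sandwich {R n N C t}.

Section Alg.
Variable R : realType.
Variable n : nat.
Implicit Types P Q : 'M[R]_n.

Lemma posdef_ge0 P (k : 'rV[R]_n) : posdef P -> 0 <= (k *m P *m k^T) 0 0.
Proof.
move=> [_ hP]; have [->|k0] := eqVneq k 0.
  by rewrite !mul0mx mxE.
exact/ltW/hP.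
Qed.
Arguments posdef_ge0 {P} k.

Lemma posdef_unit P Q w : posdef P -> posdef Q -> 0 <= w ->
  (P + w *: Q) \in unitmx.
Proof.
move=> hP hQ w0; rewrite unitmxE unitfE; apply/negP => /det0P [v v0 vM].
have : (v *m (P + w *: Q) *m v^T) 0 0 = 0 by rewrite vM !mul0mx mxE.
rewrite mulmxDr mulmxDl -scalemxAr -scalemxAl mxE [X in _ + X]mxE.
have := hP.2 v v0; have := posdef_ge0 v hQ => h1 h2.
move=> /eqP; rewrite paddr_eq0 ?mulr_ge0 //; last exact: ltW.
by case/andP => /eqP e; move: h2; rewrite e ltxx.
Qed.
Arguments posdef_unit {P Q w}.

Lemma key P Q w (x : 'rV[R]_n) : posdef P -> posdef Q -> 0 <= w -> x != 0 ->
  0 < (x *m (invmx (P + w *: Q) *m Q *m invmx (P + w *: Q)) *m x^T) 0 0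
   - w * (x *m (invmx (P + w *: Q) *m Q *m invmx (P + w *: Q) *m Q *m invmx (P + w *: Q)) *m x^T) 0 0.
Proof.
move=> hP hQ w0 x0; set N := invmx (P + w *: Q).
have U := posdef_unit hP hQ w0.
have NT : N^T = N by rewrite /N trmx_inv linearD /= linearZ /= hP.1 hQ.1.
have NM : N *m (P + w *: Q) = 1%:M by rewrite mulVmx.
have NM' : N *m P + w *: (N *m Q) = 1%:M by rewrite scalemxAr -mulmxDr.
set y := x *m N.
have y0 : y != 0.
  apply: contraNneq x0 => y0; rewrite -[x]mulmx1 -NM mulmxA.
  by rewrite -/y y0 mul0mx.
have yT : y^T = N *m x^T by rewrite trmx_mul NT.
set k := y *m Q *m N.
have kT : k^T = N *m Q *m y^T by rewrite !trmx_mul NT hQ.1 mulmxA.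
set a := y *m Q *m y^T.
set b := y *m Q *m N *m Q *m y^T.
set c := y *m Q *m N *m Q *m N *m Q *m y^T.
set d := y *m Q *m N *m P *m N *m Q *m y^T.
have E1 : (x *m (N *m Q *m N) *m x^T) = a by rewrite /a yT /y !mulmxA.
have E2 : (x *m (N *m Q *m N *m Q *m N) *m x^T) = b by rewrite /b yT /y !mulmxA.
have E3 : d + w *: c = b.
  have -> : d = (y *m Q) *m (N *m P) *m (N *m Q *m y^T) by rewrite /d !mulmxA.
  have -> : c = (y *m Q) *m (N *m Q) *m (N *m Q *m y^T) by rewrite /c !mulmxA.
  rewrite scalemxAl scalemxAr -mulmxDl -mulmxDr NM' mulmx1 /b !mulmxA //.
have E4 : (y - w *: k) *m Q *m (y - w *: k)^T = a - w *: b - w *: b + (w * w) *: c.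
  have zT : (y - w *: k)^T = y^T - w *: (N *m Q *m y^T).
    by rewrite -kT; apply/matrixP => i j; rewrite !mxE.
  rewrite zT !(mulmxBl, mulmxBr) /k.
  rewrite -!scalemxAl -!scalemxAr !scalerA !mulmxA -/a -/b -/c.
  by rewrite opprB addrA addrAC.
have E5 : k *m P *m k^T = d by rewrite kT /d /k !mulmxA.
rewrite E1 E2.
have -> : a 0 0 - w * b 0 0 = ((y - w *: k) *m Q *m (y - w *: k)^T) 0 0 + w * (k *m P *m k^T) 0 0.
  rewrite E4 E5 -E3 !mxE; ring.
have [z0|z0] := eqVneq (y - w *: k) 0.
  have w0' : w != 0.
    by apply: contraNneq y0 => w00; apply/eqP; move: z0; rewrite w00 scale0r subr0.
  have k0 : k != 0.
    by apply: contraNneq y0 => k00; apply/eqP; move: z0; rewrite k00 scaler0 subr0.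
  rewrite z0 !mul0mx mxE add0r mulr_gt0 //; last exact: hP.2.
  by rewrite lt_def w0' w0.
by rewrite ltr_pwDl ?mulr_ge0 ?posdef_ge0 //; exact: hQ.2.
Qed.

Lemma qf_lin (x : 'rV[R]_n) (A B : 'M[R]_n) (s t : R) :
  (x *m (s *: A + t *: B) *m x^T) 0 0 =
  s * (x *m A *m x^T) 0 0 + t * (x *m B *m x^T) 0 0.
Proof.
by rewrite mulmxDr mulmxDl -!scalemxAr -!scalemxAl mxE [X in _ + X]mxE !mxE.
Qed.

Lemma tr_lin (A B : 'M[R]_n) (s t : R) :
  (s *: A + t *: B)^T = s *: A^T + t *: B^T.
Proof. by apply/matrixP => i j; rewrite !mxE. Qed.
End Alg.
Arguments posdef_ge0 {R n P} k.
Arguments posdef_unit {R n P Q w}.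
Arguments key {R n P Q w x}.
Arguments qf_lin {R n}.
Arguments tr_lin {R n}.


Theorem lemma3 (R : realType) (n : nat) (PA PB QA QB : 'M[R]_n) :
  posdef PA -> posdef PB -> posdef QA -> posdef QB ->
  forall w : R, 0 <= w <= 1 ->
    let H := H_SCI PA PB QA QB in
    [/\ derivable H w 1, derivable (derive1 H) w 1 & negdef (derive1 (derive1 H) w)].
Proof.
move=> hPA hPB hQA hQB w /andP[w0 w1] H.
set PB' := PB + QB; set QB' := - QB.
have eB y : PB + (1 - y) *: QB = PB' + y *: QB'.
  by rewrite /PB' /QB' scalerBl scale1r scalerN addrA.
pose NA := fun y : R => invmx (PA + y *: QA).
pose NB := fun y : R => invmx (PB' + y *: QB').
pose KA := fun y => NA y *m QA *m NA y.
pose KB := fun y => NB y *m QB *m NB y.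
pose G := fun y => NA y - y *: KA y - NB y + (1 - y) *: KB y.
have HE : H = (fun x => id x *: NA x) + (fun x => (1 - x) *: NB x).
  by apply/funext => y; rewrite /H /H_SCI /= eB.
have da t : derivable (cst (1:R) - (@id R)) t 1.
  by apply: derivableB; [exact: derivable_cst | exact: derivable_id].
have Da t : 'D_1 (cst (1:R) - (@id R)) t = -1.
  rewrite deriveB; [|exact: derivable_cst|exact: derivable_id].
  by rewrite derive_cst derive_id sub0r.
have D1 t : (PA + t *: QA) \in unitmx -> (PB' + t *: QB') \in unitmx ->
    derivable H t 1 /\ 'D_1 H t = G t.
  move=> uA uB.
  have [_ [dA DA]] := inv_derive uA.
  have [_ [dB DB]] := inv_derive uB.
  have dS1 := scale_derive (@derivable_id _ _ t 1) dA.
  have dS2 := scale_derive (da t) dB.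
  rewrite HE; split; first by apply: derivableD; [exact: dS1.1 | exact: dS2.1].
  rewrite deriveD; [|exact: dS1.1 | exact: dS2.1].
  rewrite dS1.2 dS2.2 (Da t) DA DB derive_id.
  by rewrite /G /KA /NA /NB /QB' /= mulmxN mulNmx opprK scale1r scaleN1r scalerN !addrA.
have uA : (PA + w *: QA) \in unitmx := posdef_unit hPA hQA w0.
have w1' : 0 <= 1 - w by rewrite subr_ge0.
have uB : (PB' + w *: QB') \in unitmx by rewrite -eB; exact: posdef_unit hPB hQB w1'.
have [nA [dA DA]] := inv_derive uA.
have [nB [dB DB]] := inv_derive uB.
have DH1 : \forall y \near w, derive1 H y = G y.
  near=> y; rewrite derive1E.
  have uAy : (PA + y *: QA) \in unitmx by near: y; exact: nA.
  have uBy : (PB' + y *: QB') \in unitmx by near: y; exact: nB.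
  exact: (D1 y uAy uBy).2.
have [dKA DKA] := sandwich (C:=QA) dA.
have [dKB DKB] := sandwich (C:=QB) dB.
have [dSA DSA] := scale_derive (@derivable_id _ _ w 1) dKA.
have [dSB DSB] := scale_derive (da w) dKB.
have GE : G = ((NA - (fun x => id x *: KA x)) - NB) + (fun x => (cst (1:R) - (@id R)) x *: KB x).
  by apply/funext => y; rewrite /G !fctE.
have dG : derivable G w 1.
  rewrite GE; apply: derivableD; last exact: dSB.
  apply: derivableB; last exact: dB.
  apply: derivableB; [exact: dA | exact: dSA].
have DG : 'D_1 G w = ('D_1 NA w - ('D_1 id w *: KA w + w *: 'D_1 KA w) - 'D_1 NB w)
   + ('D_1 (cst (1:R) - (@id R)) w *: KB w + (cst (1:R) - (@id R)) w *: 'D_1 KB w).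
  have dAS : derivable (NA - (fun x => id x *: KA x)) w 1.
    by apply: derivableB; [exact: dA | exact: dSA].
  rewrite GE deriveD; [|apply: derivableB; [exact: dAS | exact: dB] | exact: dSB].
  rewrite deriveB; [|exact: dAS | exact: dB].
  rewrite deriveB; [|exact: dA | exact: dSA].
  by rewrite DSA DSB.
split.
- exact: (D1 w uA uB).1.
- apply: (near_eq_derivable _ dG); near=> y; apply/esym; near: y; exact: DH1.
rewrite derive1E (near_eq_derive _ DH1) DG.
have kA x (x0 : x != 0) := key hPA hQA w0 x0.
have kB x (x0 : x != 0) := key hPB hQB w1' x0.
rewrite /KA /KB DKA DKB !DA !DB derive_id Da /QB' /NA /NB /=.
rewrite !(mulmxN, mulNmx, opprK, mulmxA).
have aT : (invmx (PA + w *: QA))^T = invmx (PA + w *: QA).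
  rewrite trmx_inv; congr invmx; apply/matrixP => i j.
  by rewrite !mxE -[in RHS]hPA.1 -[in RHS]hQA.1 !mxE.
have bT : (invmx (PB' + w *: - QB))^T = invmx (PB' + w *: - QB).
  rewrite trmx_inv; congr invmx; apply/matrixP => i j.
  by rewrite /PB' !mxE -[in RHS]hPB.1 -[in RHS]hQB.1 !mxE.
have eBw : PB + (1 - w) *: QB = PB' + w *: - QB by rewrite eB.
rewrite eBw in kB.
set a := invmx (PA + w *: QA) in aT kA *.
set b := invmx (PB' + w *: - QB) in bT kB *.
have EQ : forall (YA XA YB XB : 'M[R]_n) (w v : R),
  - YA - (1 *: YA + w *: (- XA - XA)) - YB + (-1 *: YB + v *: (XB + XB)) =
  (-2) *: (1 *: YA + (-w) *: XA) + (-2) *: (1 *: YB + (-v) *: XB).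
  by move=> YA XA YB XB w' v; apply/matrixP => i j; rewrite !mxE; ring.
rewrite EQ (_ : (cst (1:R) - @id R) w = 1 - w) //.
have YAT : (a *m QA *m a)^T = a *m QA *m a by rewrite !trmx_mul aT hQA.1 !mulmxA.
have XAT : (a *m QA *m a *m QA *m a)^T = a *m QA *m a *m QA *m a.
  by rewrite !trmx_mul aT hQA.1 !mulmxA.
have YBT : (b *m QB *m b)^T = b *m QB *m b by rewrite !trmx_mul bT hQB.1 !mulmxA.
have XBT : (b *m QB *m b *m QB *m b)^T = b *m QB *m b *m QB *m b.
  by rewrite !trmx_mul bT hQB.1 !mulmxA.
split; first by rewrite !tr_lin YAT XAT YBT XBT.
move=> x x0; rewrite !qf_lin.
have := kA x x0; have := kB x x0.
nra.
Unshelve. all: by end_near.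
Qed.
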